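(* Let $x^k\in\mathbb{R}^n$ and $0<\alpha\le 1/L$, and suppose the gradient balance condition $\|\omega(x^k)\|\le\|\psi(x^k)\|$ holds. Then the subspace ISTA step $x^{k+1}=x^k-\alpha\,\psi(x^k)$ satisfies $$F(x^{k+1})-F(x^* )\le\bigl(1-\tfrac12\lambda\alpha\bigr)\bigl(F(x^k)-F(x^* )\bigr).$$
   Context: $A\in\mathbb{R}^{n\times n}$ is symmetric positive definite, with smallest eigenvalue $\lambda>0$ and largest eigenvalue $L$. Further, $b\in\mathbb{R}^n$ and $\tau\ge 0$. Define $f(x)=\tfrac12 x^TAx-b^Tx$, $g(x)=Ax-b$, and $F(x)=f(x)+\tau\|x\|_1$. Let $x^*$ be the unique minimizer of $F$. Use the convention $\mathrm{sgn}(0)=0$; $\|\cdot\|$ is the Euclidean norm. For $\alpha>0$, $i=1,\dots,n$ and $g=g(x)$: - $\omega(x)_i=0$ if $x_i\ne0$; $\omega(x)_i=0$ if $x_i=0$ and $|g_i|\le\tau$; $\omega(x)_i=g_i-\tau\,\mathrm{sgn}(g_i)$ if $x_i=0$ and $|g_i|>\tau$. - $\psi(x)_i=\frac1\alpha\bigl(x_i-\max\{|x_i-\alpha g_i|-\alpha\tau,0\}\,\mathrm{sgn}(x_i-\alpha g_i)\bigr)$ if $x_i\ne0$, and $\psi(x)_i=0$ if $x_i=0$. *)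

(* Defs.v *)
(* R : rcfType (real closed field, so Num.sqrt exists). *)
From HB Require Import structures.
From mathcomp Require Import all_boot all_order all_algebra.
Set Implicit Arguments. Unset Strict Implicit. Unset Printing Implicit Defensive.
Import Order.TTheory GRing.Theory Num.Theory.
Local Open Scope ring_scope.

Section Defs.
Variables (R : rcfType) (n : nat).
Implicit Types (A : 'M[R]_n) (b x : 'cV[R]_n) (tau alpha : R).

Definition grad A b x : 'cV[R]_n := A *m x - b.

Definition fq A b x : R := 2^-1 * (x^T *m A *m x) 0 0 - (b^T *m x) 0 0.

Definition l1norm x : R := \sum_i `|x i 0|.

Definition enorm x : R := Num.sqrt (\sum_i x i 0 ^+ 2).

Definition Fobj A b tau x : R := fq A b x + tau * l1norm x.

(* Num.sg 0 = 0, matching sgn(0) = 0 *)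
Definition omega A b tau x : 'cV[R]_n :=
  \col_i (let g := grad A b x i 0 in
          if x i 0 != 0 then 0
          else if `|g| <= tau then 0
          else g - tau * Num.sg g).

Definition psi A b tau alpha x : 'cV[R]_n :=
  \col_i (let g := grad A b x i 0 in
          if x i 0 != 0 then
            alpha^-1 * (x i 0 - Num.max (`|x i 0 - alpha * g| - alpha * tau) 0
                                  * Num.sg (x i 0 - alpha * g))
          else 0).

Definition symmx A : Prop := A^T = A.
Definition posdef A : Prop := forall x : 'cV[R]_n, x != 0 -> 0 < (x^T *m A *m x) 0 0.

End Defs.

(* Main.v *)
Require Import Defs.
From HB Require Import structures.
From mathcomp Require Import all_boot all_order all_algebra.
From mathcomp Require Import complex ring lra.
Import Order.TTheory GRing.Theory Num.Theory.
Local Open Scope ring_scope.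

Section Spectral.
Local Open Scope complex_scope.
Local Open Scope ring_scope.
Local Open Scope sesquilinear_scope.
Lemma conjCr (R : rcfType) (x : R) : Num.conj (x%:C) = x%:C.
Proof. apply/CrealP. by apply/complex_realP; exists x. Qed.

Lemma spectral_bounds (R : rcfType) n (A : 'M[R]_n) (lo hi : R) :
  A^T = A -> (forall mu, eigenvalue A mu -> lo <= mu <= hi) ->
  forall x : 'cV[R]_n,
  lo * (x^T *m x) 0 0 <= (x^T *m A *m x) 0 0 <= hi * (x^T *m x) 0 0.
Proof.
move=> Asym Heig x.
pose AC := map_mx (real_complex R) A.
have herm : AC \is hermsymmx.
  apply/is_hermitianmxP; rewrite expr0 scale1r; apply/matrixP => i j.
  by rewrite !mxE conjCr -{1}Asym mxE.
have /orthomx_spectralP hP := hermitian_normalmx herm.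
set P := spectralmx AC in hP; set D := spectral_diag AC in hP.
have Pu : P \is unitarymx := spectral_unitarymx AC.
have Punit : P \in unitmx := spectral_unit AC.
have /mxOverP Dreal := hermitian_spectral_diag_real herm.
have eig : forall j, lo <= complex.Re (D 0 j) <= hi.
  move=> j; apply: Heig.
  rewrite eigenvalue_root_char -(fmorph_root (real_complex R)) map_char_poly.
  rewrite -eigenvalue_root_char.
  have E := RRe_real (Dreal 0 j).
  rewrite (_ : _ (complex.Re (D 0 j)) = D 0 j); last exact: E.
  rewrite -/AC.
  apply/eigenvalueP; exists (row j P).
    rewrite -row_mul.
    have -> : P *m AC = diag_mx D *m P.
      by rewrite {1}hP !mulmxA mulmxV // mul1mx.
    by rewrite mul_diag_mx; apply/rowP => k; rewrite !mxE.
  apply/eqP => h; move/unitarymxP: Pu => /(congr1 (row j)).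
  rewrite row_mul h mul0mx => /rowP/(_ j); rewrite !mxE eqxx => /eqP.
  by rewrite eq_sym oner_eq0.
pose xc := map_mx (real_complex R) x.
pose y := P *m xc.
pose s k := (complex.Re (y k 0)) ^+ 2 + (complex.Im (y k 0)) ^+ 2.
have s_ge0 k : 0 <= s k by rewrite addr_ge0 ?sqr_ge0.
have hx : map_mx Num.conj xc^T = xc^T.
  by apply/matrixP => i j; rewrite !mxE conjCr.
have hyh : xc^T *m (P ^t* )%sesqui = map_mx Num.conj y^T.
  by rewrite /y trmx_mul map_mxM hx.
have PtP : (P ^t* )%sesqui *m P = 1%:M by rewrite -invmx_unitary // mulVmx.
have sE k : Num.conj (y k 0) * y k 0 = (s k)%:C.
  by rewrite /s add_Re2_Im2 normCK mulrC.
have Q2 : ((x^T *m x) 0 0)%:C = \sum_k (s k)%:C.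
  have -> : ((x^T *m x) 0 0)%:C = (xc^T *m xc) 0 0.
    by rewrite /xc map_trmx -map_mxM [RHS]mxE.
  rewrite -[xc in _ *m xc]mul1mx -PtP !mulmxA hyh -mulmxA mxE.
  by apply: eq_bigr => k _; rewrite [map_mx _ _ _ _]mxE [y^T _ _]mxE sE.
have Q1 : ((x^T *m A *m x) 0 0)%:C = \sum_k (complex.Re (D 0 k) * s k)%:C.
  have -> : ((x^T *m A *m x) 0 0)%:C = (xc^T *m AC *m xc) 0 0.
    by rewrite /xc /AC map_trmx -!map_mxM [RHS]mxE.
  rewrite hP invmx_unitary // !mulmxA hyh -[_ *m P *m xc]mulmxA -/y mxE.
  apply: eq_bigr => k _; rewrite mul_mx_diag [(\matrix_(i, j) _) _ _]mxE.
  rewrite [map_mx _ _ _ _]mxE [y^T _ _]mxE mulrAC sE rmorphM /=.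
  rewrite (_ : _ (complex.Re (D 0 k)) = D 0 k) 1?mulrC //.
  exact: (RRe_real (Dreal 0 k)).
rewrite -rmorph_sum in Q1; rewrite -rmorph_sum in Q2.
move/complexI: Q1 => ->; move/complexI: Q2 => ->.
rewrite !mulr_sumr; apply/andP; split; apply: ler_sum => k _.
  by rewrite ler_wpM2r // (andP (eig k)).1.
by rewrite ler_wpM2r // (andP (eig k)).2.
Qed.

End Spectral.

Lemma maxE (R : rcfType) (c k : R) : Num.max (`|c| - k) 0 * Num.sg c =
  if `|c| - k <= 0 then 0 else (`|c| - k) * Num.sg c.
Proof. by case: lerP => h //; rewrite mul0r. Qed.

Lemma prox_ineq (R : rcfType) (c k y : R) : 0 <= k ->
  (Num.max (`|c| - k) 0 * Num.sg c - c) ^+ 2 + 2 * k * `|Num.max (`|c| - k) 0 * Num.sg c|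
   + (y - Num.max (`|c| - k) 0 * Num.sg c) ^+ 2 <= (y - c) ^+ 2 + 2 * k * `|y|.
Proof.
move=> hk; rewrite maxE.
case: (lerP (`|c| - k) 0) => hck.
  rewrite normr0 subr0 sub0r sqrrN.
  have hc : `|c| * `|y| <= k * `|y| by rewrite ler_wpM2r // -subr_le0.
  move: hc hck; case: (lerP 0 y) => hy; case: (lerP 0 c) => h;
    rewrite ?(ger0_norm h) ?(ltr0_norm h) ?(ger0_norm hy) ?(ltr0_norm hy); nra.
move: hck; case: (ltrgt0P c) => hc.
- rewrite gtr0_sg // mulr1 => hck.
  rewrite (ger0_norm (ltW hck)); case: (lerP 0 y) => hy;
    rewrite ?(ger0_norm hy) ?(ltr0_norm hy); nra.
- rewrite ltr0_sg // mulrN1 => hck.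
  rewrite normrN (ger0_norm (ltW hck)); case: (lerP 0 y) => hy;
    rewrite ?(ger0_norm hy) ?(ltr0_norm hy); nra.
- by rewrite hc sub0r oppr_gt0 => h; exfalso; lra.
Qed.

Definition phic (R : rcfType) (g tau alpha x y : R) :=
  g * (y - x) + (2 * alpha)^-1 * (y - x) ^+ 2 + tau * `|y| - tau * `|x|.
Arguments phic {R}.

Lemma phic_conv (R : rcfType) (g tau alpha x e t : R) : 0 <= tau -> 0 <= t <= 1 ->
  phic g tau alpha x (x + t * e) <=
  t * phic g tau alpha x (x + e) + (t ^+ 2 - t) * ((2 * alpha)^-1 * e ^+ 2).
Proof.
move=> ht /andP[t0 t1].
have hn : `|x + t * e| <= (1 - t) * `|x| + t * `|x + e|.
  have -> : x + t * e = (1 - t) * x + t * (x + e) by ring.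
  apply: le_trans (ler_normD _ _) _.
  by rewrite !normrM (ger0_norm t0) ger0_norm // subr_ge0.
rewrite /phic.
have : tau * `|x + t * e| <= tau * ((1 - t) * `|x| + t * `|x + e|) by rewrite ler_wpM2l.
set ia := (2 * alpha)^-1.
move=> h; nra.
Qed.

Lemma coord (R : rcfType) (x g tau alpha z p w : R) : 0 < alpha -> 0 <= tau ->
  p = (if x != 0 then alpha^-1 * (x - Num.max (`|x - alpha * g| - alpha * tau) 0
                                  * Num.sg (x - alpha * g)) else 0) ->
  w = (if x != 0 then 0 else if `|g| <= tau then 0 else g - tau * Num.sg g) ->
  alpha / 2 * (p ^+ 2 - w ^+ 2) <= @phic R g tau alpha x z - 2 * @phic R g tau alpha x (x - alpha * p).
Proof.
move=> ha ht hp hw; set phi := @phic R g tau alpha x.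
have hk : 0 <= alpha * tau by rewrite mulr_ge0 // ltW.
have ha0 : alpha != 0 by rewrite gt_eqF.
have key y : 2 * alpha * phi y =
    (y - (x - alpha * g)) ^+ 2 - (alpha * g) ^+ 2 + 2 * (alpha * tau) * `|y|
    - 2 * (alpha * tau) * `|x|.
  rewrite /phi /phic; field.
  by [].
have prox := @prox_ineq R (x - alpha * g) (alpha * tau) z hk.
set s := Num.max _ _ * _ in prox hp.
have suff2 : forall X, 0 <= 2 * alpha * X -> 0 <= X.
  by move=> X; rewrite pmulr_rge0 // mulr_gt0.
rewrite -subr_ge0; apply: suff2.
case: (eqVneq x 0) => hx.
  have E1 := key z.
  have E4 : phi 0 = 0 by rewrite /phi /phic hx !subrr normr0; ring.
  rewrite hp hw hx eqxx /= mulr0 subr0 E4.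
  have F0 : (s - (x - alpha * g)) ^+ 2 + 2 * (alpha * tau) * `|s| - (alpha * g) ^+ 2
            = - (alpha * (if `|g| <= tau then 0 else g - tau * Num.sg g)) ^+ 2.
    have Es : s = (if alpha * `|g| - alpha * tau <= 0 then 0
                   else (alpha * `|g| - alpha * tau) * - Num.sg g).
      by rewrite /s maxE hx sub0r normrN sgrN normrM (gtr0_norm ha) sgrM (gtr0_sg ha) mul1r.
    rewrite Es hx; case: (lerP `|g| tau) => hg.
      rewrite ifT; last by rewrite -mulrBr pmulr_rle0 // subr_le0.
      rewrite normr0; ring.
    rewrite ifF; last by apply/negbTE; rewrite -ltNge -mulrBr pmulr_rgt0 // subr_gt0.
    move: hg; case: (ltrgt0P g) => hg0 hg.
    - rewrite gtr0_sg // ?mulrN1 ?mulr1 normrN ger0_norm; first ring.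
      nra.
    - rewrite ltr0_sg // ?mulrN1 ?mulr1 opprK ger0_norm; first ring.
      nra.
    - by exfalso; move: hg; rewrite ltNge ht.
  rewrite hx in E1 F0 prox.
  have h2 := sqr_ge0 (z - s).
  have G : 2 * alpha * (phi z - 2 * 0 - alpha / 2 * (0 ^+ 2 - (if `|g| <= tau then 0 else g - tau * Num.sg g) ^+ 2))
    = 2 * alpha * phi z + (alpha * (if `|g| <= tau then 0 else g - tau * Num.sg g)) ^+ 2 by field.
  rewrite G E1; rewrite normr0 in E1 *; lra.
have hxs : x - alpha * p = s by rewrite hp hx /=; field.
have prox' := @prox_ineq R (x - alpha * g) (alpha * tau) x hk.
rewrite -/s in prox'.
rewrite hxs hw hx /=.
have E1 := key z; have E2 := key s.
have E3 : alpha * p = x - s by rewrite -hxs; ring.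
have E4 : phi x = 0 by rewrite /phi /phic !subrr; ring.
have E5 := key x; rewrite E4 in E5.
have G : 2 * alpha*(phi z - 2* phi s - alpha/2*(p ^+ 2 - 0 ^+ 2)) = 2 * alpha* phi z - 2*(2 * alpha* phi s) - (alpha * p) ^+ 2 by field.
have h1 : (x - (x - alpha * g)) ^+ 2 = (alpha * g) ^+ 2 by ring.
rewrite h1 in prox'.
have h2 := sqr_ge0 (z - s).
rewrite G E1 E2 E3; lra.
Qed.

Section Main.
Variables (R : rcfType) (n : nat).

Lemma dot_sum (u v : 'cV[R]_n) : (u^T *m v) 0 0 = \sum_i u i 0 * v i 0.
Proof. by rewrite mxE; apply: eq_bigr => i _; rewrite mxE. Qed.

Lemma Fobj_phi (A : 'M[R]_n) b tau alpha (x v : 'cV[R]_n) : A^T = A -> alpha != 0 ->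
  Fobj A b tau (x + v) = Fobj A b tau x
    + \sum_i phic (grad A b x i 0) tau alpha (x i 0) (x i 0 + v i 0)
    + 2^-1 * (v^T *m A *m v) 0 0 - (2 * alpha)^-1 * (v^T *m v) 0 0.
Proof.
move=> Asym ha.
have tr1 (M : 'M[R]_1) : M 0 0 = M^T 0 0 by rewrite mxE.
have E1 : (x^T *m A *m v) 0 0 = (v^T *m A *m x) 0 0.
  by rewrite tr1 !trmx_mul trmxK Asym mulmxA.
have E2 : (b^T *m v) 0 0 = (v^T *m b) 0 0 by rewrite tr1 trmx_mul trmxK.
have Es : \sum_i phic (grad A b x i 0) tau alpha (x i 0) (x i 0 + v i 0) =
   (v^T *m grad A b x) 0 0 + (2 * alpha)^-1 * (v^T *m v) 0 0
   + tau * l1norm (x + v) - tau * l1norm x.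
  rewrite !dot_sum /l1norm !mulr_sumr -!big_split -sumrB /=.
  by apply: eq_bigr => i _; rewrite /phic !mxE; ring.
rewrite Es /Fobj /fq /grad.
have addE (M N : 'M[R]_1) : (M + N) 0 0 = M 0 0 + N 0 0 by rewrite mxE.
have oppE (M : 'M[R]_1) : (- M) 0 0 = - M 0 0 by rewrite mxE.
rewrite !mulmxDr !raddfD /= !mulmxDl mulmxN !mulmxA !addE oppE E1 E2.
by field.
Qed.
End Main.

Theorem lemma2 (R : rcfType) (n : nat) (A : 'M[R]_n) (b : 'cV[R]_n)
  (tau lam L alpha : R) (xstar xk : 'cV[R]_n) :
  symmx A -> posdef A ->
  eigenvalue A lam -> (forall mu, eigenvalue A mu -> lam <= mu) ->
  eigenvalue A L -> (forall mu, eigenvalue A mu -> mu <= L) ->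
  0 < lam ->
  0 <= tau ->
  (forall y : 'cV[R]_n, Fobj A b tau xstar <= Fobj A b tau y) ->
  0 < alpha -> alpha <= L^-1 ->
  enorm (omega A b tau xk) <= enorm (psi A b tau alpha xk) ->
  Fobj A b tau (xk - alpha *: psi A b tau alpha xk) - Fobj A b tau xstar
    <= (1 - 2^-1 * lam * alpha) * (Fobj A b tau xk - Fobj A b tau xstar).
Proof.
move=> Asym _ Hlam Hlmin HL HLmax lam0 tau0 _ a0 aL Hbal.
have lamL : lam <= L := Hlmin L HL.
have L0 : 0 < L := lt_le_trans lam0 lamL.
have ha0 : alpha != 0 by rewrite gt_eqF.
have aL' : alpha * L <= 1.
  by have := ler_wpM2r (ltW L0) aL; rewrite mulVf // gt_eqF.
have bnd := @spectral_bounds R n A lam L Asym.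
have {bnd} bnd : forall v : 'cV[R]_n,
    lam * (v^T *m v) 0 0 <= (v^T *m A *m v) 0 0 <= L * (v^T *m v) 0 0.
  by apply: bnd => mu h; rewrite Hlmin // HLmax.
have vv0 (v : 'cV[R]_n) : 0 <= (v^T *m v) 0 0.
  by rewrite dot_sum sumr_ge0 // => i _; rewrite -expr2 sqr_ge0.
set x := xk; set g := grad A b x; set p := psi A b tau alpha x.
set w := omega A b tau x.
set F := Fobj A b tau.
pose phi i y := phic (g i 0) tau alpha (x i 0) y.
have D1 : F (x - alpha *: p) <= F x + \sum_i phi i (x i 0 - alpha * p i 0).
  rewrite /F (@Fobj_phi R n A b tau alpha x (- (alpha *: p)) Asym ha0) -/g.
  have -> : \sum_i phic (g i 0) tau alpha (x i 0) (x i 0 + (- (alpha *: p)) i 0)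
     = \sum_i phi i (x i 0 - alpha * p i 0).
    by apply: eq_bigr => i _; rewrite [(- (alpha *: p)) i 0]mxE [(alpha *: p) i 0]mxE.
  set v := - (alpha *: p).
  have h1 := (andP (bnd v)).2; have h2 := vv0 v.
  have h3 : L * (v^T *m v) 0 0 <= alpha^-1 * (v^T *m v) 0 0.
    apply: ler_wpM2r => //; rewrite -(ler_pM2l a0) mulfV //.
  rewrite invfM; set ia := alpha^-1 in h3 *.
  lra.
set e := xstar - x.
set t := alpha * lam.
have t0 : 0 <= t by rewrite mulr_ge0 // ltW.
have t1 : t <= 1.
  by apply: le_trans aL'; rewrite ler_wpM2l // ltW.
have Fe := @Fobj_phi R n A b tau alpha x e Asym ha0.
have xe : x + e = xstar by rewrite /e addrC subrK.
rewrite xe -/F -/g in Fe.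
set ia := (2 * alpha)^-1 in Fe.
have D2 : \sum_i phi i (x i 0 + t * e i 0) <=
    t * \sum_i phi i (x i 0 + e i 0) + (t ^+ 2 - t) * (ia * (e^T *m e) 0 0).
  rewrite dot_sum !mulr_sumr -big_split /=; apply: ler_sum => i _.
  by have := @phic_conv R (g i 0) tau alpha (x i 0) (e i 0) t tau0; rewrite t0 t1 expr2; apply.
have D3 : \sum_i (alpha / 2 * (p i 0 ^+ 2 - w i 0 ^+ 2)) <=
    \sum_i (phi i (x i 0 + t * e i 0) - 2 * phi i (x i 0 - alpha * p i 0)).
  apply: ler_sum => i _; apply: coord => //; by rewrite mxE.
rewrite -mulr_sumr sumrB sumrB -mulr_sumr in D3.
have Hb : \sum_i w i 0 ^+ 2 <= \sum_i p i 0 ^+ 2.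
  by move: Hbal; rewrite /enorm ler_sqrt // sumr_ge0 // => i _; rewrite sqr_ge0.
have he := (andP (bnd e)).1; have hee := vv0 e.
have h1 : t * (lam * (e^T *m e) 0 0) <= t * (e^T *m A *m e) 0 0 by rewrite ler_wpM2l.
have hid : t ^+ 2 * ia * (e^T *m e) 0 0 = 2^-1 * t * lam * (e^T *m e) 0 0.
  by rewrite /ia /t; field.
have hpa : 0 <= alpha / 2 * (\sum_i p i 0 ^+ 2 - \sum_i w i 0 ^+ 2).
  by rewrite mulr_ge0 // ?subr_ge0 // divr_ge0 // ltW.
rewrite /t in D2 h1 hid t0 t1 *.
nra.
Qed.
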